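(* Let $R$ be a commutative integral domain with identity, $\Gamma$ a discrete group with identity $e$, and $(\mathcal{G},c)\in\mathcal{C}_{R,\Gamma}$. Let $g\in\Gamma$ and $(m,n)\in N_R(\mathcal{G})_g$. Then: (1) $mn=1_{s(\operatorname{supp}(n))}$ and $nm=1_{s(\operatorname{supp}(m))}$; (2) $\operatorname{supp}(m)$ is a compact open bisection contained in $c^{-1}(g)$; (3) $\operatorname{supp}(n)=\operatorname{supp}(m)^{-1}$.
   Context: An ample Hausdorff groupoid is a Hausdorff topological groupoid whose range and source maps $r,s$ are local homeomorphisms and whose unit space $\mathcal{G}^0$ has a basis of compact open sets; a bisection is a subset on which $r$ and $s$ restrict to homeomorphisms onto open subsets of $\mathcal{G}^0$; $\mathcal{G}_x^x=\{\eta:s(\eta)=r(\eta)=x\}$. A continuous cocycle is a continuous groupoid homomorphism $c:\mathcal{G}\to\Gamma$. $A_R(\mathcal{G})$ is the Steinberg algebra: locally constant compactly supported functions $\mathcal{G}\to R$, pointwise addition, convolution $(f*g)(\eta)=\sum_{\alpha\beta=\eta}f(\alpha)g(\beta)$; $D_R(\mathcal{G})$ is the subalgebra of functions supported in $\mathcal{G}^0$; $\operatorname{supp}(f)=\{\eta:f(\eta)\ne0\}$; $1_U$ is the indicator function of $U$; $A_R(\mathcal{G})_g=\{f:\operatorname{supp}(f)\subseteq c^{-1}(g)\}$. $\mathcal{C}_{R,\Gamma}$ is the class of pairs $(\mathcal{G},c)$ with $\mathcal{G}$ an ample Hausdorff groupoid and $c:\mathcal{G}\to\Gamma$ a continuous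 cocycle such that there is a dense $X\subseteq\mathcal{G}^0$ with the group ring $R(c^{-1}(e)\cap\mathcal{G}_x^x)$ having no zero-divisors and only trivial units (every invertible element is of the form $uh$, $u\in R$, $h$ in the group) for all $x\in X$. A normaliser of $D_R(\mathcal{G})$ is a pair $(m,n)\in A_R(\mathcal{G})\times A_R(\mathcal{G})$ with $mD_R(\mathcal{G})n\cup nD_R(\mathcal{G})m\subseteq D_R(\mathcal{G})$, $mnm=m$ and $nmn=n$; $N_R(\mathcal{G})$ is the set of normalisers and $N_R(\mathcal{G})_g=N_R(\mathcal{G})\cap(A_R(\mathcal{G})_g\times A_R(\mathcal{G})_{g^{-1}})$. *)

(* Defs.v *)
From HB Require Import structures.
From mathcomp Require Import all_boot all_algebra.
From Stdlib Require Import ClassicalDescription IndefiniteDescription.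
Set Implicit Arguments. Unset Strict Implicit. Unset Printing Implicit Defensive.
Import GRing.Theory.
Local Open Scope ring_scope.

(* Groupoids: a set with partially defined multiplication (a*b is only
   meaningful when s a = r b), inverse, source and range maps.  The unit
   space is {x | r x = x}.                                              *)
Record groupoid := Groupoid {
  gcar :> Type;
  gmul : gcar -> gcar -> gcar;
  ginv : gcar -> gcar;
  gs : gcar -> gcar;
  gr : gcar -> gcar;
  gs_r : forall a, gs (gr a) = gr a;
  gr_r : forall a, gr (gr a) = gr a;
  gs_s : forall a, gs (gs a) = gs a;
  gr_s : forall a, gr (gs a) = gs a;
  gs_mul : forall a b, gs a = gr b -> gs (gmul a b) = gs b;
  gr_mul : forall a b, gs a = gr b -> gr (gmul a b) = gr a;
  gmulA : forall a b c, gs a = gr b -> gs b = gr c ->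
            gmul (gmul a b) c = gmul a (gmul b c);
  gmul_r : forall a, gmul (gr a) a = a;
  gmul_s : forall a, gmul a (gs a) = a;
  gs_inv : forall a, gs (ginv a) = gr a;
  gr_inv : forall a, gr (ginv a) = gs a;
  gmulV : forall a, gmul a (ginv a) = gr a;
  gmulVl : forall a, gmul (ginv a) a = gs a
}.

Section Groupoids.
Variable G : groupoid.

Definition unit_space (x : G) : Prop := gr x = x.

Definition img (f : G -> G) (S : G -> Prop) : G -> Prop :=
  fun y => exists x, S x /\ f x = y.

Definition isotropy (x : G) : G -> Prop := fun a => gs a = x /\ gr a = x.

Variable op : (G -> Prop) -> Prop.

Definition is_topology : Prop :=
  op (fun _ => True) /\
  (forall U V, op U -> op V -> op (fun x => U x /\ V x)) /\
  (forall (I : Type) (F : I -> G -> Prop),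
      (forall i, op (F i)) -> op (fun x => exists i, F i x)).

Definition open_in_units (W : G -> Prop) : Prop :=
  exists V, op V /\ forall x, W x <-> (V x /\ unit_space x).

Definition compact (K : G -> Prop) : Prop :=
  forall (I : Type) (F : I -> G -> Prop),
    (forall i, op (F i)) -> (forall x, K x -> exists i, F i x) ->
    exists l : seq I, forall x, K x -> exists i, List.In i l /\ F i x.

Definition closure (S : G -> Prop) : G -> Prop :=
  fun x => forall U, op U -> U x -> exists y, U y /\ S y.

Definition hausdorff : Prop :=
  forall x y : G, x <> y -> exists U V, op U /\ op V /\ U x /\ V y /\
    forall z, ~ (U z /\ V z).

Definition dense_in_units (X : G -> Prop) : Prop :=
  forall W, open_in_units W -> (exists x, W x) -> exists x, W x /\ X x.

Definition homeo_onto_open (f : G -> G) (B : G -> Prop) : Prop :=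
  (forall x y, B x -> B y -> f x = f y -> x = y) /\
  (forall x, B x -> unit_space (f x)) /\
  open_in_units (img f B) /\
  (forall V, op V -> exists W, op W /\ forall x, B x -> (V (f x) <-> W x)) /\
  (forall W, op W -> exists V, op V /\ forall y,
      img f (fun x => B x /\ W x) y <-> (V y /\ img f B y)).

Definition local_homeo (f : G -> G) : Prop :=
  forall a, exists U, op U /\ U a /\ homeo_onto_open f U.

Definition bisection (B : G -> Prop) : Prop :=
  homeo_onto_open (@gr G) B /\ homeo_onto_open (@gs G) B.

Definition mul_continuous : Prop :=
  forall O, op O -> forall a b : G, gs a = gr b -> O (gmul a b) ->
    exists U V, op U /\ op V /\ U a /\ V b /\
      forall a' b', U a' -> V b' -> gs a' = gr b' -> O (gmul a' b').

Definition inv_continuous : Prop :=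
  forall O, op O -> op (fun x => O (ginv x)).

Definition units_compact_open_basis : Prop :=
  forall W x, open_in_units W -> W x ->
    exists K, open_in_units K /\ compact K /\ (forall y, K y -> W y) /\ K x.

Definition ample_hausdorff : Prop :=
  is_topology /\ mul_continuous /\ inv_continuous /\ hausdorff /\
  local_homeo (@gr G) /\ local_homeo (@gs G) /\ units_compact_open_basis.

(* continuous cocycle into a discrete group *)
Definition cocycle (Gam : groupType) (c : G -> Gam) : Prop :=
  (forall a b, gs a = gr b -> c (gmul a b) = (c a * c b)%g) /\
  (forall S : Gam -> Prop, op (fun x => S (c x))).

Variable R : idomainType.

(* sum of F over the (assumed finite) set of a with P a and F a <> 0;
   defaults to 0 if that set is infinite *)
Definition fsum (P : G -> Prop) (F : G -> R) : R :=
  match excluded_middle_informative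
          (exists l : seq G, List.NoDup l /\
             forall a, List.In a l <-> (P a /\ F a <> 0)) with
  | left h => \sum_(a <- proj1_sig (constructive_indefinite_description _ h)) F a
  | right _ => 0
  end.

(* (f*g)(eta) = sum_{alpha beta = eta} f(alpha) g(beta);
   the pairs are alpha with r alpha = r eta, beta = alpha^-1 eta *)
Definition conv (f g : G -> R) : G -> R :=
  fun eta => fsum (fun a => gr a = gr eta) (fun a => f a * g (gmul (ginv a) eta)).

Definition supp (f : G -> R) : G -> Prop := fun x => f x <> 0.

Definition ind (U : G -> Prop) : G -> R :=
  fun x => if excluded_middle_informative (U x) then 1 else 0.

Definition locally_constant (f : G -> R) : Prop :=
  forall x, exists U, op U /\ U x /\ forall y, U y -> f y = f x.

Definition steinberg (f : G -> R) : Prop :=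
  locally_constant f /\ compact (closure (supp f)).

Definition diagonal (f : G -> R) : Prop :=
  steinberg f /\ forall x, supp f x -> unit_space x.

Definition homogeneous (Gam : groupType) (c : G -> Gam) (g : Gam) (f : G -> R) :=
  steinberg f /\ forall x, supp f x -> c x = g.

Definition normaliser (m n : G -> R) : Prop :=
  steinberg m /\ steinberg n /\
  (forall d, diagonal d ->
     diagonal (conv (conv m d) n) /\ diagonal (conv (conv n d) m)) /\
  conv (conv m n) m = m /\ conv (conv n m) n = n.

Definition normaliser_deg (Gam : groupType) (c : G -> Gam) (g : Gam) (m n : G -> R) :=
  normaliser m n /\ homogeneous c g m /\ homogeneous c (g^-1)%g n.

(* Group ring R(H) of a subgroup H of an isotropy group G_x^x, realised as
   the finitely supported functions G -> R with support in H; the group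
   ring product is the convolution (restricted to such functions) and the
   unit is the indicator of {x}.                                        *)
Definition gr_elt (H : G -> Prop) (a : G -> R) : Prop :=
  (forall y, supp a y -> H y) /\
  exists l : seq G, forall y, supp a y -> List.In y l.

Definition zerof : G -> R := fun _ => 0.

Definition gr_no_zero_divisors (H : G -> Prop) : Prop :=
  forall a b, gr_elt H a -> gr_elt H b -> conv a b = zerof ->
    a = zerof \/ b = zerof.

Definition gr_trivial_units (H : G -> Prop) (x : G) : Prop :=
  forall a, gr_elt H a ->
    (exists b, gr_elt H b /\ conv a b = ind (fun y => y = x) /\
                             conv b a = ind (fun y => y = x)) ->
    exists (u : R) (h : G), H h /\ a = (fun y => u * ind (fun z => z = h) y).

(* (G,c) in C_{R,Gamma} (G assumed ample Hausdorff separately) *)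
Definition in_class (Gam : groupType) (c : G -> Gam) : Prop :=
  exists X : G -> Prop, (forall x, X x -> unit_space x) /\ dense_in_units X /\
    forall x, X x ->
      let H := fun a => c a = 1%g /\ isotropy x a in
      gr_no_zero_divisors H /\ gr_trivial_units H x.

End Groupoids.

(* Main.v *)
Require Import Defs.
From HB Require Import structures.
From mathcomp Require Import all_boot all_algebra.
From mathcomp Require Import boolp classical_sets cardinality fsbigop.
From Stdlib Require Import ClassicalDescription IndefiniteDescription.
Set Implicit Arguments. Unset Strict Implicit. Unset Printing Implicit Defensive.
Import GRing.Theory.
Local Open Scope ring_scope.
HB.instance Definition _ (G : groupoid) := gen_eqMixin (gcar G).
HB.instance Definition _ (G : groupoid) := gen_choiceMixin (gcar G).

Section GroupoidLemmas.
Variable G : groupoid.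
Implicit Types a b u : G.

Lemma unit_gr a : unit_space (gr a). Proof. exact: gr_r. Qed.
Lemma unit_gs a : unit_space (gs a). Proof. exact: gr_s. Qed.
Lemma unit_gsE u : unit_space u -> gs u = u.
Proof. by rewrite /unit_space => h; rewrite -h gs_r. Qed.
Lemma unit_inv u : unit_space u -> ginv u = u.
Proof.
move=> h. have e1 : gr (ginv u) = u by rewrite gr_inv unit_gsE.
by rewrite -[ginv u]gmul_r e1 gmulV h.
Qed.
Lemma gmulKl a b : gs a = gr b -> gmul (ginv a) (gmul a b) = b.
Proof. by move=> h; rewrite -gmulA ?gs_inv ?gmulVl ?h ?gmul_r. Qed.
Lemma gmulKr a b : gs a = gr b -> gmul (gmul a b) (ginv b) = a.
Proof. by move=> h; rewrite gmulA ?gr_inv ?gmulV -?h ?gmul_s. Qed.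
Lemma ginvK a : ginv (ginv a) = a.
Proof.
rewrite -[ginv (ginv a)]gmul_s gs_inv gr_inv -gmulVl gmulKl // gs_inv //.
Qed.
Lemma ginvM a b : gs a = gr b -> ginv (gmul a b) = gmul (ginv b) (ginv a).
Proof.
move=> h.
have c2 : gs (gmul a b) = gr (gmul (ginv b) (ginv a)).
  rewrite gs_mul // gr_mul; first by rewrite gr_inv.
  by rewrite gs_inv gr_inv.
have e1 : gmul b (gmul (ginv b) (ginv a)) = ginv a.
  rewrite -gmulA; [|by rewrite gr_inv|by rewrite gs_inv gr_inv].
  by rewrite gmulV -h -gr_inv gmul_r.
have e2 : gmul (gmul a b) (gmul (ginv b) (ginv a)) = gr (gmul a b).
  rewrite gmulA //; last by rewrite gr_mul; [rewrite gr_inv|rewrite gs_inv gr_inv].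
  by rewrite e1 gmulV gr_mul.
rewrite -[RHS](gmulKl c2) e2 -gs_inv gmul_s //.
Qed.
Lemma gmulcancel a b b' : gs a = gr b -> gs a = gr b' -> gmul a b = gmul a b' -> b = b'.
Proof. by move=> h1 h2 e; rewrite -(gmulKl h1) e gmulKl. Qed.
End GroupoidLemmas.

Section Sums.
Variable G : groupoid.
Variable R : idomainType.
Implicit Types a b u : G.
Local Open Scope classical_set_scope.

Lemma In_mem (x : G) (s : seq G) : List.In x s <-> x \in s.
Proof.
elim: s => [|y s IH] /=; first by split.
rewrite in_cons; split.
  by case=> [->|/IH ->]; rewrite ?eqxx ?orbT.
by case/orP=> [/eqP ->|/IH]; [left|right].
Qed.

Lemma NoDup_uniq (s : seq G) : List.NoDup s <-> uniq s.
Proof.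
elim: s => [|y s IH] /=; first by split => // _; constructor.
split.
  move=> h; inversion h; subst; apply/andP; split; last exact/IH.
  by apply/negP => /In_mem.
case/andP => h1 h2; constructor; last exact/IH.
by move/In_mem; apply/negP.
Qed.

Lemma fsumE (P : G -> Prop) (F : G -> R) : fsum P F = \sum_(a \in P) F a.
Proof.
rewrite /fsum; case: excluded_middle_informative => [h|h].
  case: (constructive_indefinite_description _ h) => l /= [nd hl].
  rewrite (fsbigE l) //.
  - rewrite [RHS]big_mkcond; apply: eq_big_seq => x /In_mem/hl [Px _].
    by rewrite ifT //; apply: mem_set.
  - exact/NoDup_uniq.
  - by move=> x /= /In_mem /hl [].
  - move=> i Pi ni; case: (eqVneq (F i) 0) => // /eqP Fi.
    by case/negP: ni; apply/In_mem/hl.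
rewrite fsbig_dflt // => fin; apply: h.
case/finite_seqP: fin => s hs.
exists (undup s); split; first by apply/NoDup_uniq; exact: undup_uniq.
move=> a; rewrite In_mem mem_undup.
have: (P `&` F @^-1` [set~ 0]) a <-> [set` s] a by rewrite hs.
by move=> e; split => [/e|/e].
Qed.

Lemma convE (f g : G -> R) eta :
  conv f g eta = \sum_(a \in [set a | gr a = gr eta]) f a * g (gmul (ginv a) eta).
Proof. by rewrite /conv fsumE. Qed.
End Sums.

Section Conv.
Variable G : groupoid.
Variable R : idomainType.
Implicit Types a b u : G.
Implicit Types f g h d : G -> R.
Local Open Scope classical_set_scope.

Lemma gmulKVl a b : gr a = gr b -> gmul a (gmul (ginv a) b) = b.
Proof.
move=> e; rewrite -gmulA; [|by rewrite gr_inv|by rewrite gs_inv].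
by rewrite gmulV e gmul_r.
Qed.

Lemma fsum_restrict (P Q : set G) (F : G -> R) : Q `<=` P ->
  (forall a, P a -> F a <> 0 -> Q a) -> \sum_(a \in P) F a = \sum_(a \in Q) F a.
Proof.
move=> QP h; rewrite (fsbig_widen Q P) // => a [Pa nQa] /=.
by apply: contra_notP nQa => /h; apply.
Qed.

Definition diagsupp d := forall x, d x <> 0 -> unit_space x.
Definition rfin f := forall x, finite_set [set a | f a <> 0 /\ gr a = x].

Lemma conv_diag_r f d eta : diagsupp d -> conv f d eta = f eta * d (gs eta).
Proof.
move=> hd; rewrite convE (fsum_restrict (Q := [set eta])).
- by rewrite fsbig_set1 gmulVl.
- by move=> a /= ->.
move=> a /= ea; case: (eqVneq (d (gmul (ginv a) eta)) 0) => [->|/eqP /hd u]; first by rewrite mulr0.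
move=> _; rewrite /unit_space gr_mul ?gs_inv // gr_inv in u.
by rewrite -(gmulKVl ea) -u gmul_s.
Qed.

Lemma conv_diag_l f d eta : diagsupp d -> conv d f eta = d (gr eta) * f eta.
Proof.
move=> hd; rewrite convE (fsum_restrict (Q := [set gr eta])).
- by rewrite fsbig_set1 (unit_inv (unit_gr eta)) gmul_r.
- by move=> a /= ->; rewrite gr_r.
move=> a /= ea; case: (eqVneq (d a) 0) => [->|/eqP /hd u]; first by rewrite mul0r.
by move=> _; rewrite -ea u.
Qed.

End Conv.

Section Assoc.
Variable G : groupoid.
Variable R : idomainType.
Implicit Types a b u : G.
Implicit Types f g h d : G -> R.
Local Open Scope classical_set_scope.

Lemma convS f g eta (S : set G) : S `<=` [set a | gr a = gr eta] ->
  (forall a, gr a = gr eta -> f a <> 0 -> S a) ->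
  conv f g eta = \sum_(a \in S) f a * g (gmul (ginv a) eta).
Proof.
move=> SA hS; rewrite convE (fsum_restrict (Q := S)) // => a /= ea.
by case: (eqVneq (f a) 0) => [->|/eqP fa _]; [rewrite mul0r|exact: hS].
Qed.

Arguments convS {f g eta} S _ _.

Lemma conv_subr f g h eta : finite_set [set a | f a <> 0 /\ gr a = gr eta] ->
  conv f (fun x => g x - h x) eta = conv f g eta - conv f h eta.
Proof.
move=> fin.
have SA : [set a | f a <> 0 /\ gr a = gr eta] `<=` [set a | gr a = gr eta] by move=> a [].
have hS : forall a, gr a = gr eta -> f a <> 0 -> [set a | f a <> 0 /\ gr a = gr eta] a by [].
rewrite !(convS _ SA hS) !fsbig_finite // -sumrB.
by apply: eq_bigr => a _; rewrite mulrBr.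
Qed.

Lemma inv_shift a b eta : gr a = gr b -> gr a = gr eta ->
  gmul (ginv (gmul (ginv a) b)) (gmul (ginv a) eta) = gmul (ginv b) eta.
Proof.
move=> ab ae.
rewrite ginvM ?gs_inv // ginvK gmulA ?gs_inv //; last by rewrite gr_mul ?gs_inv // gr_inv.
by rewrite gmulKVl.
Qed.

Lemma gr_invmul a b : gr a = gr b -> gr (gmul (ginv a) b) = gs a.
Proof. by move=> e; rewrite gr_mul ?gs_inv // gr_inv. Qed.

Lemma conv_assoc f g h eta : rfin f -> rfin g ->
  conv (conv f g) h eta = conv f (conv g h) eta.
Proof.
move=> rf rg.
set A := [set a : G | gr a = gr eta].
set Af := [set a | f a <> 0 /\ gr a = gr eta].
set A2 := \bigcup_(c in Af) [set gmul c d | d in [set d | g d <> 0 /\ gr d = gs c]].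
have finAf : finite_set Af by exact: rf.
have finA2 : finite_set A2.
  by apply: bigcup_finite => // c _; apply: finite_image; exact: rg.
have A2A : A2 `<=` A.
  by move=> x [c [_ ec] [d [_ ed] <-]]; rewrite /A /= gr_mul // ed.
have AfA : Af `<=` A by move=> x [].
have hA2 : forall a, A2 a -> gr a = gr eta by move=> a /A2A.
pose F a c := f c * g (gmul (ginv c) a) * h (gmul (ginv a) eta).
have inA2 : forall a c, Af c -> gr a = gr eta -> g (gmul (ginv c) a) <> 0 -> A2 a.
  move=> a c Afc ea ga; exists c => //; exists (gmul (ginv c) a) => //.
    by split => //; rewrite gr_invmul // ea; case: Afc => _ ->.
  by rewrite gmulKVl // ea; case: Afc => _ ->.
have L : conv (conv f g) h eta = \sum_(a \in A2) \sum_(c \in Af) F a c.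
  rewrite (convS A2) //.
  - apply: eq_fsbigr => a /set_mem A2a.
    rewrite (convS Af); first by rewrite mulr_fsuml.
      by move=> x [_ ex]; rewrite /= ex (hA2 _ A2a).
    by move=> x ex fx; split => //; rewrite ex (hA2 _ A2a).
  move=> a /= ea hfg.
  have [c Afc] : exists2 c, Af c & f c * g (gmul (ginv c) a) != 0.
    apply: (@fsbigN1 _ _ _ _ _ Af (fun a0 c => f c * g (gmul (ginv c) a0)) a).
    apply/eqP => e; apply: hfg.
    rewrite (convS Af); [exact: e | by move=> x [_ ex]; rewrite /= ex ea |].
    by move=> x ex fx; split => //; rewrite ex ea.
  rewrite mulf_eq0 negb_or => /andP[_ /eqP gc].
  exact: (inA2 a c).
have Rr : conv f (conv g h) eta = \sum_(c \in Af) \sum_(a \in A2) F a c.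
  rewrite (convS Af) //; apply: eq_fsbigr => c /set_mem [fc ec].
  rewrite convE mulr_fsumr.
  rewrite (reindex_fsbig (fun a => gmul (ginv c) a) A).
  - rewrite (fsum_restrict (Q := A2)) //.
      apply: eq_fsbigr => a /set_mem A2a.
      by rewrite /F inv_shift ?ec ?(hA2 _ A2a) // mulrA.
    move=> a ea; rewrite inv_shift ?ec //.
    by case: (eqVneq (g (gmul (ginv c) a)) 0) => [->|/eqP gc]; [rewrite mul0r mulr0|move=> _; exact: (inA2 a c (conj fc ec) ea gc)].
  split.
  + by move=> a ea; rewrite /= gr_invmul ?ea ?ec // gr_invmul // ec.
  + move=> a b /set_mem ea /set_mem eb e.
    apply: (gmulcancel (a := ginv c)) => //; by rewrite gs_inv ?ea ?eb.
  + move=> d /= ed; exists (gmul c d).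
      rewrite /A /= gr_mul -?ec //; rewrite ed gr_invmul // ec.
    by rewrite gmulKl // ed gr_invmul // ec.
rewrite L Rr exchange_fsbig //.
Qed.

End Assoc.

Section Topo.
Variable G : groupoid.
Variable op : (G -> Prop) -> Prop.
Hypothesis hG : ample_hausdorff op.
Implicit Types a b u x y : G.

Lemma hT : is_topology op. Proof. by case: hG. Qed.
Lemma hH : hausdorff op. Proof. by case: hG => _ [_ [_ []]]. Qed.
Lemma hLr : local_homeo op (@gr G). Proof. by case: hG => _ [_ [_ [_ []]]]. Qed.
Lemma hLs : local_homeo op (@gs G). Proof. by case: hG => _ [_ [_ [_ [_ []]]]]. Qed.
Lemma hB : units_compact_open_basis op. Proof. by case: hG => _ [_ [_ [_ [_ []]]]]. Qed.

Lemma op_ext (A B : G -> Prop) : (forall x, A x <-> B x) -> op A -> op B.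
Proof. by move=> e; have -> : A = B by apply: funext => x; apply: propext. Qed.

Lemma op_union (I : Type) (F : I -> G -> Prop) : (forall i, op (F i)) ->
  op (fun x => exists i, F i x).
Proof. by case: hT => _ [_ h]; apply: h. Qed.

Lemma op_inter (A B : G -> Prop) : op A -> op B -> op (fun x => A x /\ B x).
Proof. by case: hT => _ [h _]; apply: h. Qed.

Lemma op_True : op (fun _ => True). Proof. by case: hT. Qed.

Lemma op_empty : op (fun _ => False).
Proof.
apply: (op_ext (A := fun x => exists i : False, (fun _ _ => True) i x)).
  by move=> x; split => [[]|].
by apply: op_union => -[].
Qed.

Lemma op_biginter (I : Type) (F : I -> G -> Prop) (l : seq I) : (forall i, op (F i)) ->
  op (fun x => forall i, List.In i l -> F i x).
Proof.
move=> hF; elim: l => [|i l IH].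
  by apply: (op_ext (A := fun _ => True)) => [x|]; [split|exact: op_True].
apply: (op_ext (A := fun x => F i x /\ forall j, List.In j l -> F j x)).
  move=> x; split => [[h1 h2] j /= [<-|]|h]; [done|exact: h2|].
  by split => [|j hj]; apply: h => /=; [left|right].
exact: op_inter.
Qed.

Lemma op_local (A : G -> Prop) :
  (forall x, A x -> exists U, op U /\ U x /\ forall y, U y -> A y) -> op A.
Proof.
move=> h.
have F : forall i : {x | A x}, {U | op U /\ U (proj1_sig i) /\ forall y, U y -> A y}.
  by move=> [x Ax]; apply: constructive_indefinite_description; exact: h.
apply: (op_ext (A := fun x => exists i, proj1_sig (F i) x)).
  move=> x; split => [[i]|Ax].
    by case: (F i) => U /= [_ [_ hU]]; apply: hU.
  by exists (exist _ x Ax); case: (F _) => U /= [_ []].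
by apply: op_union => i; case: (F i) => U [].
Qed.

Lemma lh_cont (f : G -> G) : local_homeo op f -> forall V, op V -> op (fun x => V (f x)).
Proof.
move=> hf V oV; apply: op_local => a Va.
case: (hf a) => U [oU [Ua [_ [_ [_ [hc _]]]]]].
case: (hc V oV) => W [oW hW].
exists (fun x => U x /\ W x); split; first exact: op_inter.
split; first by split => //; apply/hW.
by move=> y [Uy Wy]; apply/hW.
Qed.

Lemma units_open : op (@unit_space G).
Proof.
apply: op_local => x ux.
case: (hLr x) => U [oU [Ux [inj [_ [_ [hc _]]]]]].
case: (hc U oU) => W [oW hW].
exists (fun a => U a /\ W a); split; first exact: op_inter.
split; first by split => //; apply/(hW x Ux); rewrite ux.
move=> a [Ua Wa]; have Ura : U (gr a) by apply/hW.
by rewrite /unit_space; apply: inj => //; rewrite gr_r.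
Qed.

Lemma compact_closed (K : G -> Prop) x : compact op K -> ~ K x ->
  exists U, op U /\ U x /\ forall z, U z -> ~ K z.
Proof.
move=> cK nKx.
have F : forall i : {z | K z}, {UV : (G -> Prop) * (G -> Prop) | op UV.1 /\ op UV.2 /\
   UV.1 (proj1_sig i) /\ UV.2 x /\ forall w, ~ (UV.1 w /\ UV.2 w)}.
  move=> [z Kz]; apply: constructive_indefinite_description.
  have zx : z <> x by move=> e; apply: nKx; rewrite -e.
  case: (hH zx) => U [V [oU [oV [Uz [Vx d]]]]].
  by exists (U, V).
have h1 : forall i, op ((proj1_sig (F i)).1) by move=> i; exact: (proj2_sig (F i)).1.
have h2 : forall z, K z -> exists i, (proj1_sig (F i)).1 z.
  by move=> z Kz; exists (exist _ z Kz); exact: (proj2_sig (F _)).2.2.1.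
case: (cK _ _ h1 h2) => l hl.
exists (fun w => forall i, List.In i l -> (proj1_sig (F i)).2 w); split.
  by apply: op_biginter => i; exact: (proj2_sig (F i)).2.1.
split; first by move=> i _; exact: (proj2_sig (F i)).2.2.2.1.
move=> z hz Kz; case: (hl z Kz) => i [il hi].
have d := (proj2_sig (F i)).2.2.2.2; exact: (d z (conj hi (hz i il))).
Qed.

Lemma fib_fin (f : G -> G) : local_homeo op f -> forall K, compact op K ->
  forall y, finite_set [set a | K a /\ f a = y].
Proof.
move=> hf K cK y.
have F : forall a : G, {U | op U /\ U a /\ homeo_onto_open op f U}.
  by move=> a; apply: constructive_indefinite_description; exact: hf.
have h1 : forall a, op (proj1_sig (F a)) by move=> a; exact: (proj2_sig (F a)).1.
have h2 : forall z, K z -> exists a, proj1_sig (F a) z.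
  by move=> z Kz; exists z; exact: (proj2_sig (F z)).2.1.
case: (cK _ _ h1 h2) => l hl.
pose pick i := xget i [set a | (K a /\ f a = y) /\ proj1_sig (F i) a].
apply: (sub_finite_set (B := [set` map pick l])); last exact: finite_seq.
move=> a [Ka fa]; case: (hl a Ka) => i [il Ua].
have hp : (K (pick i) /\ f (pick i) = y) /\ proj1_sig (F i) (pick i).
  by apply: (@xgetI _ i [set b | (K b /\ f b = y) /\ proj1_sig (F i) b] a).
have -> : a = pick i.
  have inj := (proj2_sig (F i)).2.2.1; case: hp => [[_ fp] Up].
  by apply: inj => //; rewrite fa fp.
by rewrite /= map_f //; apply/In_mem.
Qed.

End Topo.

Section Units.
Variable G : groupoid.
Variable op : (G -> Prop) -> Prop.
Hypothesis hG : ample_hausdorff op.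
Variable R : idomainType.
Implicit Types a b u x y : G.
Local Open Scope classical_set_scope.

Definition cou (W : G -> Prop) := open_in_units op W /\ compact op W.

Lemma oiu_unit W x : open_in_units op W -> W x -> unit_space x.
Proof. by case=> V [_ h] /h []. Qed.

Lemma oiu_open W : open_in_units op W -> op W.
Proof.
case=> V [oV h]; apply: (op_ext (A := fun x => V x /\ unit_space x)).
  by move=> x; rewrite h.
by apply: op_inter => //; apply: units_open.
Qed.

Lemma compact_ext (A B : G -> Prop) : (forall x, A x <-> B x) -> compact op A -> compact op B.
Proof. by move=> e; have -> : A = B by apply: funext => x; apply: propext. Qed.

Lemma supp_ind W x : supp (ind R W) x <-> W x.
Proof.
rewrite /supp /ind; case: excluded_middle_informative => h; split => //.
  by move=> _; apply/eqP; apply: oner_neq0.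
Qed.

Lemma ind_in W x : W x -> ind R W x = 1.
Proof. by rewrite /ind; case: excluded_middle_informative. Qed.
Lemma ind_out W x : ~ W x -> ind R W x = 0.
Proof. by rewrite /ind; case: excluded_middle_informative. Qed.

Lemma ind_diag W : cou W -> Defs.diagonal op (ind R W).
Proof.
move=> [oW cW]; split; last by move=> x sx; apply: (oiu_unit oW); exact: (proj1 (supp_ind W x) sx).
split.
  move=> x; case: (excluded_middle_informative (W x)) => Wx.
    exists W; split; first exact: oiu_open.
    by split => // y Wy; rewrite !ind_in.
  case: (compact_closed hG cW Wx) => U [oU [Ux hU]].
  exists U; split => //; split => // y Uy.
  by rewrite !ind_out // => /(hU y Uy).
apply: (compact_ext (A := W)) => // x; split.
  by move=> Wx U oU Ux; exists x; split => //; exact: (proj2 (supp_ind W x) Wx).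
move=> cx; apply: NNPP => Wx.
case: (compact_closed hG cW Wx) => U [oU [Ux hU]].
by case: (cx U oU Ux) => y [Uy sy]; apply: (hU y) => //; exact: (proj1 (supp_ind W y) sy).
Qed.

Lemma cou_empty : cou (fun _ => False).
Proof.
split; last by move=> I F _ _; exists [::] => x [].
exists (fun _ => False); split; [exact: op_empty hG | by move=> x; split => [|[]]].
Qed.

Lemma cou_union A B : cou A -> cou B -> cou (fun x => A x \/ B x).
Proof.
move=> [[VA [oA hA]] cA] [[VB [oB hB']] cB]; split.
  exists (fun x => exists b : bool, (if b then VA else VB) x); split.
    by apply: (op_union hG) => -[].
  move=> x; rewrite hA hB'; split.
    by case=> -[? ?]; split => //; [exists true|exists false].
  by case=> -[[] ? ?]; [left|right].
move=> I F oF cov.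
case: (cA I F oF) => [x Ax|lA hlA]; first by apply: cov; left.
case: (cB I F oF) => [x Bx|lB hlB]; first by apply: cov; right.
exists (lA ++ lB) => x [/hlA|/hlB] [i [il Fi]]; exists i; split => //;
  apply: List.in_or_app; [left|right] => //.
Qed.

Lemma cou_at y : unit_space y -> exists W, cou W /\ W y.
Proof.
move=> uy.
have ou : open_in_units op (@unit_space G).
  by exists (fun _ => True); split; [exact: op_True hG | move=> x; split => [|[]]].
case: (hB hG ou uy) => K [oK [cK [_ Ky]]].
by exists K.
Qed.

Lemma cou_finite (S : set G) : finite_set S -> (forall x, S x -> unit_space x) ->
  exists W, cou W /\ forall x, S x -> W x.
Proof.
case/finite_seqP => s -> {S}; elim: s => [|y s IH] hu.
  by exists (fun _ => False); split; [exact: cou_empty|move=> x].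
case: IH => [x xs|W [cW hW]]; first by apply: hu; rewrite /= in_cons xs orbT.
case: (@cou_at y) => [|K [cK Ky]]; first by apply: hu; rewrite /= in_cons eqxx.
exists (fun x => K x \/ W x); split; first exact: cou_union.
move=> x; rewrite /= in_cons => /orP [/eqP ->|xs]; [left|right] => //.
exact: hW.
Qed.

Lemma cou_sep y1 y2 : unit_space y1 -> unit_space y2 -> y1 <> y2 ->
  exists W1 W2, cou W1 /\ cou W2 /\ W1 y1 /\ W2 y2 /\ forall x, ~ (W1 x /\ W2 x).
Proof.
move=> u1 u2 ne; case: (hH hG ne) => U1 [U2 [o1 [o2 [h1 [h2 d]]]]].
have ou : forall U, op U -> open_in_units op (fun x => U x /\ unit_space x).
  by move=> U oU; exists U; split.
case: (hB hG (ou _ o1) (conj h1 u1)) => K1 [oK1 [cK1 [s1 K1y]]].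
case: (hB hG (ou _ o2) (conj h2 u2)) => K2 [oK2 [cK2 [s2 K2y]]].
exists K1, K2; do 4 (split => //).
by move=> x [/s1 [? _] /s2 [? _]]; apply: (d x).
Qed.

End Units.

Section Steinberg.
Variable G : groupoid.
Variable op : (G -> Prop) -> Prop.
Hypothesis hG : ample_hausdorff op.
Variable R : idomainType.
Implicit Types a b u x y : G.
Implicit Types f d : G -> R.
Local Open Scope classical_set_scope.

Lemma closure_supp f : locally_constant op f -> forall x, Defs.closure op (supp f) x <-> supp f x.
Proof.
move=> lc x; split; last by move=> sx U oU Ux; exists x.
move=> cx; apply: NNPP => nx; case: (lc x) => U [oU [Ux hU]].
case: (cx U oU Ux) => y [Uy sy]; apply: sy; rewrite hU //.
by apply: NNPP.
Qed.

Lemma st_compact f : steinberg op f -> compact op (supp f).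
Proof. by case=> lc cf; apply: (compact_ext (A := Defs.closure op (supp f))) => // x; apply: closure_supp. Qed.

Lemma st_open f : steinberg op f -> op (supp f).
Proof.
case=> lc _; apply: (op_local hG) => x sx; case: (lc x) => U [oU [Ux hU]].
by exists U; do 2 (split => //); move=> y Uy; rewrite /supp hU.
Qed.

Lemma st_rfin f : steinberg op f -> rfin f.
Proof.
move=> sf x; have := fib_fin (hLr hG) (st_compact sf) x.
by apply: sub_finite_set => a [].
Qed.

Lemma rfin_sub f f' : rfin f -> (forall a, f' a <> 0 -> f a <> 0) -> rfin f'.
Proof. by move=> rf h x; apply: sub_finite_set (rf x) => a [/h fa ea]. Qed.

Lemma diagsupp_of d : Defs.diagonal op d -> diagsupp d.
Proof. by case=> _ h x /h. Qed.

Lemma ind_diagsupp W : cou op W -> diagsupp (ind R W).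
Proof. by move=> cW; apply: diagsupp_of; apply: ind_diag. Qed.

Lemma conv_ind_r f W a : cou op W -> conv f (ind R W) a = f a * ind R W (gs a).
Proof. by move=> cW; apply: conv_diag_r; apply: ind_diagsupp. Qed.

Section P1sec.
Variables m n : G -> R.
Hypothesis hm : steinberg op m.
Hypothesis hd : forall d, Defs.diagonal op d -> Defs.diagonal op (conv (conv m d) n).

Lemma P1gen : diagsupp (conv m n).
Proof.
move=> gam pg.
set S := [set gs a | a in [set a | m a <> 0 /\ gr a = gr gam]].
have finS : finite_set S by apply: finite_image; apply: st_rfin.
have uS : forall x, S x -> unit_space x by move=> x [a _ <-]; apply: unit_gs.
case: (cou_finite hG finS uS) => K [cK hK].
have dK := hd (ind_diag hG R cK).
apply: (diagsupp_of dK); rewrite [conv (conv _ _) _ _]convE; move: pg; rewrite convE.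
suff -> : \sum_(a \in [set a | gr a = gr gam]) conv m (ind R K) a * n (gmul (ginv a) gam) =
  \sum_(a \in [set a | gr a = gr gam]) m a * n (gmul (ginv a) gam) by [].
apply: eq_fsbigr => a /set_mem ea; rewrite conv_ind_r //.
case: (eqVneq (m a) 0) => [->|/eqP ma]; first by rewrite !mul0r.
by rewrite ind_in ?mulr1 //; apply: hK; exists a.
Qed.
End P1sec.

End Steinberg.

Lemma cancel1 (R : idomainType) (x y : R) : y <> 0 -> x * y = y -> x = 1.
Proof. by move=> /eqP hy e; apply: (mulIf hy); rewrite mul1r. Qed.
Lemma cancel1r (R : idomainType) (x y : R) : y <> 0 -> y * x = y -> x = 1.
Proof. by move=> hy; rewrite mulrC; apply: cancel1. Qed.

Section Norm.
Variable G : groupoid.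
Variable op : (G -> Prop) -> Prop.
Hypothesis hG : ample_hausdorff op.
Variable R : idomainType.
Implicit Types a b u x y : G.
Local Open Scope classical_set_scope.
Variables m n : G -> R.
Hypothesis hN : normaliser op m n.

Lemma hm : steinberg op m. Proof. by case: hN. Qed.
Lemma hn : steinberg op n. Proof. by case: hN => _ []. Qed.
Lemma hd : forall d, Defs.diagonal op d ->
     Defs.diagonal op (conv (conv m d) n) /\ Defs.diagonal op (conv (conv n d) m).
Proof. by case: hN => _ [_ []]. Qed.
Lemma mnm : conv (conv m n) m = m. Proof. by case: hN => _ [_ [_ []]]. Qed.
Lemma nmn : conv (conv n m) n = n. Proof. by case: hN => _ [_ [_ []]]. Qed.
Lemma mnmE x : conv (conv m n) m x = m x. Proof. by rewrite mnm. Qed.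
Lemma nmnE x : conv (conv n m) n x = n x. Proof. by rewrite nmn. Qed.
Lemma rfm : rfin m. Proof. exact (st_rfin hG hm). Qed.
Lemma rfn : rfin n. Proof. exact (st_rfin hG hn). Qed.
Lemma Pp : diagsupp (conv m n).
Proof. by apply: (P1gen hG hm) => d dd; case: (hd dd). Qed.
Lemma Pq : diagsupp (conv n m).
Proof. by apply: (P1gen hG hn) => d dd; case: (hd dd). Qed.

Lemma P2 a : m a <> 0 -> conv m n (gr a) = 1.
Proof.
move=> ma; apply: (cancel1 ma).
by rewrite -conv_diag_l; [exact: mnmE|exact: Pp].
Qed.
Lemma P2n a : n a <> 0 -> conv n m (gr a) = 1.
Proof.
move=> na; apply: (cancel1 na).
by rewrite -conv_diag_l; [exact: nmnE|exact: Pq].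
Qed.
Lemma P3 a : m a <> 0 -> conv n m (gs a) = 1.
Proof.
move=> ma; apply: (cancel1r ma).
rewrite -conv_diag_r; last exact: Pq.
by rewrite -conv_assoc; [exact: mnmE|exact: rfm|exact: rfn].
Qed.
Lemma P3n a : n a <> 0 -> conv m n (gs a) = 1.
Proof.
move=> na; apply: (cancel1r na).
rewrite -conv_diag_r; last exact: Pp.
by rewrite -conv_assoc; [exact: nmnE|exact: rfn|exact: rfm].
Qed.

Lemma stepS a1 a2 : m a1 <> 0 -> m a2 <> 0 -> gr a1 = gr a2 -> gs a1 = gs a2.
Proof.
move=> h1 h2 e; apply: NNPP => ne.
have rn := rfn; have rmm := rfm.
case: (cou_sep hG (unit_gs a1) (unit_gs a2) ne) => W1 [W2 [c1 [c2 [w1 [w2 dis]]]]].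
set m1 := conv m (ind R W1); set m2 := conv m (ind R W2).
have m1E : forall a, m1 a = m a * ind R W1 (gs a) by move=> a; apply: (conv_ind_r hG).
have m2E : forall a, m2 a = m a * ind R W2 (gs a) by move=> a; apply: (conv_ind_r hG).
have rm1 : rfin m1.
  by apply: (rfin_sub rfm) => a; rewrite m1E => h e0; apply: h; rewrite e0 mul0r.
have rm2 : rfin m2.
  by apply: (rfin_sub rfm) => a; rewrite m2E => h e0; apply: h; rewrite e0 mul0r.
set e1 := conv m1 n; set e2 := conv m2 n.
have de1 : diagsupp e1 by apply: diagsupp_of; exact: (hd (ind_diag hG R c1)).1.
have de2 : diagsupp e2 by apply: diagsupp_of; exact: (hd (ind_diag hG R c2)).1.
have one1 : e1 (gr a1) = 1.
  apply: (cancel1 h1); rewrite -conv_diag_l // /e1 conv_assoc //.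
  by rewrite conv_diag_r; [rewrite P3 // m1E ind_in // !mulr1 | exact: Pq].
have one2 : e2 (gr a2) = 1.
  apply: (cancel1 h2); rewrite -conv_diag_l // /e2 conv_assoc //.
  by rewrite conv_diag_r; [rewrite P3 // m2E ind_in // !mulr1 | exact: Pq].
have nm2E : forall x, conv n m2 x = conv n m x * ind R W2 (gs x).
  by move=> x; rewrite /m2 -conv_assoc // (conv_ind_r hG).
have dnm2 : diagsupp (conv n m2).
  move=> x; rewrite nm2E => h; apply: Pq => e0; apply: h; by rewrite e0 mul0r.
have ne2 : forall b, conv n e2 b = conv n m (gr b) * ind R W2 (gr b) * n b.
  by move=> b; rewrite /e2 -conv_assoc // conv_diag_l // nm2E gs_r.
have zero : conv e1 e2 (gr a1) = 0.
  rewrite /e1 conv_assoc // convE; apply: fsbig1 => a /= ea.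
  rewrite ne2 m1E gr_invmul //.
  case: (excluded_middle_informative (W1 (gs a))) => hw1.
    have hw2 : ~ W2 (gs a) by move=> hw2; apply: (dis (gs a)).
    by rewrite [ind R W2 _]ind_out // !mulr0 !mul0r !mulr0.
  by rewrite [ind R W1 _]ind_out // mulr0 mul0r.
move: zero; rewrite conv_diag_r // one1 gs_r e one2 mulr1 => /eqP.
by rewrite oner_eq0.
Qed.

End Norm.

Section Cocycle.
Variable G : groupoid.
Variable op : (G -> Prop) -> Prop.
Variable Gam : groupType.
Variable c : G -> Gam.
Hypothesis hc : cocycle op c.

Lemma cM (a b : G) : gs a = gr b -> c (gmul a b) = (c a * c b)%g.
Proof. by case: hc => h _; apply: h. Qed.

Lemma c_unit (u : G) : unit_space u -> c u = 1%g.
Proof.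
move=> hu; have e : gmul u u = u by rewrite -{1}hu gmul_r.
have : (c u * c u)%g = (1 * c u)%g by rewrite -cM ?e ?mul1g // unit_gsE.
exact: mulIg.
Qed.

Lemma c_inv (a : G) : c (ginv a) = ((c a)^-1)%g.
Proof.
apply/esym/mulg1_eq; rewrite -cM ?gr_inv // gmulV c_unit //; exact: unit_gr.
Qed.
End Cocycle.

Definition Hx (G : groupoid) (Gam : groupType) (c : G -> Gam) (x0 : G) :=
  fun a => c a = 1%g /\ isotropy x0 a.

Lemma finite_list (G : groupoid) (S : set G) : finite_set S ->
  exists l : seq G, forall y, S y -> List.In y l.
Proof.
case/finite_seqP => s e; exists s => y; rewrite e /= => ys; exact/In_mem.
Qed.

Lemma conv_nz (G : groupoid) (R : idomainType) (f h : G -> R) eta : conv f h eta <> 0 ->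
  exists a, gr a = gr eta /\ f a <> 0 /\ h (gmul (ginv a) eta) <> 0.
Proof.
move=> hn; apply: NNPP => hne; apply: hn; rewrite convE; apply: fsbig1 => a /= ea.
case: (eqVneq (f a) 0) => [->|/eqP fa]; first by rewrite mul0r.
case: (eqVneq (h (gmul (ginv a) eta)) 0) => [->|/eqP ha]; first by rewrite mulr0.
by case: hne; exists a.
Qed.

Section StepT.
Variable G : groupoid.
Variable op : (G -> Prop) -> Prop.
Hypothesis hG : ample_hausdorff op.
Variable R : idomainType.
Variable Gam : groupType.
Variable c : G -> Gam.
Hypothesis hc : cocycle op c.
Variable g : Gam.
Variables m n : G -> R.
Hypothesis hN : normaliser op m n.
Hypothesis hmg : forall x, m x <> 0 -> c x = g.
Variable x0 : G.
Hypothesis hND : gr_no_zero_divisors R (Hx c x0).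
Hypothesis hTU : gr_trivial_units R (Hx c x0) x0.
Local Open Scope classical_set_scope.

Lemma H_mul a b : gs a = gr b -> Hx c x0 a -> Hx c x0 b -> Hx c x0 (gmul a b).
Proof.
move=> e [ca [sa ra]] [cb [sb rb]]; split; first by rewrite (cM hc) // ca cb mulg1.
by split; [rewrite gs_mul | rewrite gr_mul].
Qed.

Lemma H_invmul a b : gr a = gr b -> Hx c x0 a -> Hx c x0 b -> Hx c x0 (gmul (ginv a) b).
Proof.
move=> e [ca [sa ra]] [cb [sb rb]]; split.
  by rewrite (cM hc) ?gs_inv // (c_inv hc) ca cb invg1 mulg1.
by split; [rewrite gs_mul ?gs_inv | rewrite gr_invmul].
Qed.

Lemma stepT a1 a2 : m a1 <> 0 -> m a2 <> 0 -> gr a1 = x0 -> gr a2 = x0 -> a1 = a2.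
Proof.
move=> h1 h2 r1 r2.
have s12 : gs a1 = gs a2 by apply: (stepS hG hN h1 h2); rewrite r1 r2.
have ux0 : unit_space x0 by rewrite -r1; exact: unit_gr.
have Hx0 : Hx c x0 x0 by split; [exact: (c_unit hc ux0) | split; [exact: unit_gsE | exact: ux0]].
pose H := Hx c x0.
pose A := fun h => ind R H h * m (gmul h a1).
pose B := fun h => ind R H h * n (gmul (ginv a1) h).
pose I := ind R (fun y => y = x0).
have suppA : forall h, A h <> 0 -> H h /\ m (gmul h a1) <> 0.
  move=> h; rewrite /A; case: (excluded_middle_informative (H h)) => hh.
    by rewrite ind_in // mul1r.
  by rewrite ind_out // mul0r.
have suppB : forall h, B h <> 0 -> H h /\ n (gmul (ginv a1) h) <> 0.
  move=> h; rewrite /B; case: (excluded_middle_informative (H h)) => hh.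
    by rewrite ind_in // mul1r.
  by rewrite ind_out // mul0r.
have finA : finite_set [set h | A h <> 0].
  apply: (sub_finite_set (B := (fun b => gmul b (ginv a1)) @` [set b | m b <> 0 /\ gr b = x0])).
    move=> h /suppA [[_ [sh rh]] mh]; exists (gmul h a1).
      by split => //; rewrite gr_mul ?sh ?r1.
    by rewrite gmulKr // sh r1.
  by apply: finite_image; exact: (rfm hG hN x0).
have finB : finite_set [set h | B h <> 0].
  apply: (sub_finite_set (B := (fun b => gmul a1 b) @` [set b | n b <> 0 /\ gr b = gs a1])).
    move=> h /suppB [[_ [sh rh]] nh]; exists (gmul (ginv a1) h).
      by split => //; rewrite gr_invmul // r1 rh.
    by rewrite gmulKVl // r1 rh.
  by apply: finite_image; exact: (rfn hG hN (gs a1)).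
have rA : rfin A by move=> x; apply: sub_finite_set finA => a [].
have rB : rfin B by move=> x; apply: sub_finite_set finB => a [].
have eltA : gr_elt H A.
  by split; [move=> y /suppA [] | exact: finite_list finA].
have eltB : gr_elt H B.
  by split; [move=> y /suppB [] | exact: finite_list finB].
have dI : diagsupp I.
  move=> x; case: (excluded_middle_informative (x = x0)) => [->|hx] //.
  by rewrite /I ind_out.
have AB : conv A B = I.
  apply: funext => eta.
  case: (excluded_middle_informative (H eta)) => He.
    have ge : gr eta = x0 by case: He => _ [].
    transitivity (conv m n eta).
      rewrite !convE ge.
      rewrite (fsum_restrict (Q := [set a | gr a = x0 /\ gs a = x0])); first last.
      - move=> a /= ra hab; split => //.
        have : A a <> 0 by move=> e0; apply: hab; rewrite e0 mul0r.
        by case/suppA => -[_ []].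
      - by move=> a [].
      rewrite [RHS](fsum_restrict (Q := [set b | gr b = x0 /\ gs b = gs a1])); first last.
      - move=> b /= rb hb; split => //.
        have mb : m b <> 0 by move=> e0; apply: hb; rewrite e0 mul0r.
        by apply: (stepS hG hN mb h1); rewrite rb r1.
      - by move=> b [].
      rewrite [RHS](reindex_fsbig (fun a => gmul a a1) [set a | gr a = x0 /\ gs a = x0]).
        apply: eq_fsbigr => a /set_mem [ra sa].
        rewrite ginvM ?sa ?r1 // gmulA; [|by rewrite gs_inv gr_inv sa r1|by rewrite gs_inv ra ge].
        case: (excluded_middle_informative (H a)) => ha.
          have hi : H (gmul (ginv a) eta) by apply: H_invmul => //; rewrite ra ge.
          by rewrite /A /B !ind_in // !mul1r.
        rewrite /A ind_out //.
        case: (eqVneq (m (gmul a a1)) 0) => [->|/eqP ma]; first by rewrite !mul0r.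
        exfalso; apply: ha; split; last by split.
        have := hmg ma; rewrite (cM hc) ?sa ?r1 // (hmg h1) => e.
        by apply: (mulIg g); rewrite mul1g.
      split.
      + move=> a [ra sa]; split; first by rewrite gr_mul // sa r1.
        by rewrite gs_mul // sa r1.
      + move=> a b /set_mem [ra sa] /set_mem [rb sb] e.
        by rewrite -(gmulKr (a := a) (b := a1)) ?sa ?r1 // e gmulKr // sb r1.
      + move=> b [rb sb]; exists (gmul b (ginv a1)).
          split; first by rewrite gr_mul // gr_inv.
          by rewrite gs_mul ?gr_inv // gs_inv.
        have := gmulKr (a := b) (b := ginv a1); rewrite ginvK; apply.
        by rewrite gr_inv.
    case: (excluded_middle_informative (eta = x0)) => [->|ne].
      by rewrite /I ind_in // -r1 (P2 hG hN h1).
    rewrite /I ind_out //; apply: NNPP => hp; apply: ne.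
    have u : unit_space eta by apply: (Pp hG hN).
    by rewrite -u; case: He => _ [].
  rewrite /I ind_out; last by move=> e; apply: He; rewrite e.
  apply: NNPP => /conv_nz [a [ea [ha hb]]]; apply: He.
  case/suppA: ha => Ha _; case/suppB: hb => Hb _.
  rewrite -(gmulKVl ea); apply: H_mul => //.
  by rewrite gr_invmul.
have ABA : forall h, conv A (conv B A) h = A h.
  move=> h; rewrite -conv_assoc // AB conv_diag_l //.
  case: (eqVneq (A h) 0) => [->|/eqP ah]; first by rewrite mulr0.
  by rewrite /I ind_in ?mul1r //; case: (suppA _ ah) => -[_ []].
have AI : forall h, conv A I h = A h.
  move=> h; rewrite conv_diag_r //.
  case: (eqVneq (A h) 0) => [->|/eqP ah]; first by rewrite mul0r.
  by rewrite /I ind_in ?mulr1 //; case: (suppA _ ah) => -[_ []].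
pose D := fun h => conv B A h - I h.
have AD : conv A D = zerof R.
  apply: funext => h; rewrite /D conv_subr; last exact: rA.
  by rewrite ABA AI subrr.
have suppBA : forall h, conv B A h <> 0 -> H h.
  move=> h /conv_nz [a [ea [ha hb]]].
  case/suppB: ha => Ha _; case/suppA: hb => Hb _.
  rewrite -(gmulKVl ea); apply: H_mul => //.
  by rewrite gr_invmul.
have eltD : gr_elt H D.
  split.
    move=> y; rewrite /supp /D.
    case: (eqVneq (conv B A y) 0) => [->|/eqP hy _]; last exact: suppBA.
    case: (excluded_middle_informative (y = x0)) => [->//|ne].
    by rewrite /I ind_out // subrr.
  apply: finite_list.
  apply: (sub_finite_set (B := [set gmul a b | a in [set h | B h <> 0] & b in [set h | A h <> 0]] `|` [set x0])).
    move=> y; rewrite /supp /D /=.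
    case: (eqVneq (conv B A y) 0) => [->|/eqP hy _].
      case: (excluded_middle_informative (y = x0)) => [->|ne]; first by right.
      by rewrite /I ind_out // subrr.
    left; case/conv_nz: hy => a [ea [ha hb]].
    by exists a => //; exists (gmul (ginv a) y) => //; rewrite gmulKVl.
  by rewrite finite_setU; split; [apply: finite_image2 | apply: finite_set1].
case: (hND eltA eltD AD) => [A0|D0].
  exfalso; apply: h1.
  have := congr1 (fun f => f x0) A0; rewrite /A /zerof ind_in // mul1r.
  by rewrite -{1}r1 gmul_r.
have BA : conv B A = I.
  apply: funext => h; have := congr1 (fun f => f h) D0; rewrite /D /zerof => /eqP.
  by rewrite subr_eq0 => /eqP.
case: (hTU eltA (ex_intro _ B (conj eltB (conj AB BA)))) => u [h [Hh Ae]].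
have Ax0 : A x0 <> 0 by rewrite /A ind_in // mul1r -{1}r1 gmul_r.
have hx0 : h = x0.
  move: Ax0; rewrite Ae; case: (excluded_middle_informative (x0 = h)) => [->//|ne].
  by rewrite ind_out // mulr0.
set k := gmul a2 (ginv a1).
have ka : gmul k a1 = a2.
  have := gmulKr (a := a2) (b := ginv a1); rewrite ginvK; apply.
  by rewrite gr_inv s12.
have Hk : H k.
  split.
    by rewrite /k (cM hc) ?gr_inv -?s12 // (c_inv hc) (hmg h1) (hmg h2) mulgV.
  split; first by rewrite /k gs_mul ?gr_inv -?s12 // gs_inv.
  by rewrite /k gr_mul ?gr_inv -?s12.
have Ak : A k <> 0 by rewrite /A ind_in // mul1r ka.
have kx : k = x0.
  move: Ak; rewrite Ae; case: (excluded_middle_informative (k = h)) => [->//|ne].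
  by rewrite ind_out // mulr0.
by rewrite -ka kx -r1 gmul_r.
Qed.

End StepT.

Section Glue.
Variable G : groupoid.
Variable op : (G -> Prop) -> Prop.
Hypothesis hG : ample_hausdorff op.
Implicit Types a b u x y : G.

Lemma oiu_inter W1 W2 : open_in_units op W1 -> open_in_units op W2 ->
  open_in_units op (fun x => W1 x /\ W2 x).
Proof.
move=> [V1 [o1 h1]] [V2 [o2 h2]]; exists (fun x => V1 x /\ V2 x); split.
  exact: (op_inter hG).
by move=> x; rewrite h1 h2; tauto.
Qed.

Lemma oiu_local (Z : G -> Prop) :
  (forall y, Z y -> exists W, open_in_units op W /\ W y /\ forall z, W z -> Z z) ->
  open_in_units op Z.
Proof.
move=> h.
have F : forall i : {y | Z y}, {WV : (G -> Prop) * (G -> Prop) | op WV.2 /\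
   (forall x, WV.1 x <-> WV.2 x /\ unit_space x) /\ WV.1 (proj1_sig i) /\ forall z, WV.1 z -> Z z}.
  move=> [y Zy]; apply: constructive_indefinite_description.
  case: (h y Zy) => W [[V [oV hV]] [Wy hW]]; by exists (W, V).
exists (fun x => exists i, (proj1_sig (F i)).2 x); split.
  by apply: (op_union hG) => i; exact: (proj2_sig (F i)).1.
move=> x; split.
  move=> Zx; set i := exist _ x Zx.
  have [_ [e [Wx _]]] := proj2_sig (F i).
  by case/e: Wx => Vx ux; split => //; exists i.
case=> -[i Vi] ux.
have [_ [e [_ hz]]] := proj2_sig (F i).
by apply: hz; apply/e.
Qed.

Lemma img_open f U W : homeo_onto_open op f U -> op W ->
  open_in_units op (img f (fun x => U x /\ W x)).
Proof.
move=> [_ [_ [[V0 [o0 h0]] [_ hopen]]]] oW.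
case: (hopen W oW) => V [oV hV].
exists (fun y => V y /\ V0 y); split; first exact: (op_inter hG).
by move=> y; rewrite hV h0; tauto.
Qed.

Lemma img_open_glue f B : local_homeo op f -> op B -> open_in_units op (img f B).
Proof.
move=> hf oB; apply: oiu_local => y [a [Ba <-]].
case: (hf a) => U [oU [Ua hU]].
exists (img f (fun x => U x /\ B x)); split; first exact: img_open.
split; first by exists a.
by move=> z [x [[_ Bx] <-]]; exists x.
Qed.

Lemma homeo_glue f B : local_homeo op f -> (forall x, unit_space (f x)) -> op B ->
  (forall x y, B x -> B y -> f x = f y -> x = y) -> homeo_onto_open op f B.
Proof.
move=> hf fu oB inj; split => //; split => //; split; first exact: img_open_glue.
split.
  move=> V oV; exists (fun x => V (f x)); split => //; exact: (lh_cont hG hf).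
move=> W oW.
have := img_open_glue hf (op_inter hG oB oW) => -[V [oV hV]].
exists V; split => // y; split.
  move=> hy; have [Vy _] := (hV y).1 hy; split => //.
  by case: hy => x [[Bx _] <-]; exists x.
move=> [Vy [x [Bx e]]]; apply/(hV y).2; split => //; rewrite -e; exact: fu.
Qed.

End Glue.

Lemma normaliser_sym (G : groupoid) op (R : idomainType) (m n : G -> R) :
  normaliser op m n -> normaliser op n m.
Proof.
case=> hm [hn [hd [e1 e2]]]; do 2 (split => //); split => //.
by move=> d dd; case: (hd d dd).
Qed.

Section Final.
Variable G : groupoid.
Variable op : (G -> Prop) -> Prop.
Hypothesis hG : ample_hausdorff op.
Variable R : idomainType.
Variable Gam : groupType.
Variable c : G -> Gam.
Hypothesis hc : cocycle op c.
Hypothesis hC : in_class op R c.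
Implicit Types a b u x y : G.

Lemma rinj (g : Gam) (m n : G -> R) : normaliser op m n -> (forall x, m x <> 0 -> c x = g) ->
  forall a1 a2, m a1 <> 0 -> m a2 <> 0 -> gr a1 = gr a2 -> a1 = a2.
Proof.
move=> hN hmg a1 a2 h1 h2 e; apply: NNPP => ne.
case: (hH hG ne) => O1 [O2 [o1 [o2 [O1a [O2a dis]]]]].
case: (hLr hG a1) => U1 [oU1 [U1a hU1]].
case: (hLr hG a2) => U2 [oU2 [U2a hU2]].
have sm : op (supp m) by apply: (st_open hG); exact: (hm hN).
set Z1 := img (@gr G) (fun x => U1 x /\ (O1 x /\ supp m x)).
set Z2 := img (@gr G) (fun x => U2 x /\ (O2 x /\ supp m x)).
have oZ : open_in_units op (fun y => Z1 y /\ Z2 y).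
  apply: (oiu_inter hG); apply: (img_open hG) => //; exact: (op_inter hG).
case: hC => X [Xu [dX hX]].
case: (dX _ oZ) => [|u [[Z1u Z2u] Xu']].
  by exists (gr a1); split; [exists a1 | exists a2; rewrite e].
case: Z1u => b1 [[_ [Ob1 mb1]] rb1].
case: Z2u => b2 [[_ [Ob2 mb2]] rb2].
have [hND hTU] := hX u Xu'.
have := stepT hG hc hN hmg hND hTU mb1 mb2 rb1 rb2 => eb.
by apply: (dis b1); split => //; rewrite eb.
Qed.

Lemma Vgen (m n : G -> R) : normaliser op m n ->
  (forall a1 a2, m a1 <> 0 -> m a2 <> 0 -> gr a1 = gr a2 -> a1 = a2) ->
  forall eta, m eta <> 0 -> n (ginv eta) <> 0.
Proof.
move=> hN inj eta me ne.
have := P2 hG hN me; rewrite convE (fsum_restrict (Q := [set eta])).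
- rewrite fsbig_set1 -gs_inv gmul_s ne mulr0 => /eqP.
  by rewrite eq_sym oner_eq0.
- by move=> a /= ->; rewrite gr_r.
move=> a /= ea hne; apply: inj => //; last by rewrite ea gr_r.
by move=> e0; apply: hne; rewrite e0 mul0r.
Qed.

Lemma final1 (m n : G -> R) : normaliser op m n ->
  (forall eta, m eta <> 0 -> n (ginv eta) <> 0) ->
  conv m n = ind R (img (@gs G) (supp n)).
Proof.
move=> hN V; apply: funext => x.
case: (excluded_middle_informative (img (@gs G) (supp n) x)) => hx.
  by rewrite ind_in //; case: hx => b [nb <-]; apply: (P3n hG hN).
rewrite ind_out //; apply: NNPP => hp; apply: hx.
have ux : unit_space x by apply: (Pp hG hN).
case: (conv_nz hp) => a [ea [ma _]].
exists (ginv a); split; first exact: V.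
by rewrite gs_inv ea.
Qed.

End Final.

Unset Implicit Arguments.
Set Strict Implicit.

Theorem mainTheorem3 (R : idomainType) (Gam : groupType) (G : groupoid)
    (op : (G -> Prop) -> Prop) (hG : ample_hausdorff op)
    (c : G -> Gam) (hc : cocycle op c) (hC : in_class op R c)
    (g : Gam) (m n : G -> R) (hmn : normaliser_deg op c g m n) :
  (conv m n = ind R (img (@gs G) (supp n)) /\
   conv n m = ind R (img (@gs G) (supp m))) /\
  (compact op (supp m) /\ op (supp m) /\ bisection op (supp m) /\
   (forall x, supp m x -> c x = g)) /\
  (forall eta, supp n eta <-> supp m (ginv eta)).
Proof.
case: hmn => hN [[sm hmg] [sn hng]].
have hN' := normaliser_sym hN.
have im := rinj hG hc hC hN hmg.
have inn := rinj hG hc hC hN' hng.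
have Vm := Vgen hG hN im.
have Vn := Vgen hG hN' inn.
have e3 : forall eta, supp n eta <-> supp m (ginv eta).
  move=> eta; split; first exact: Vn.
  by move=> h; have := Vm _ h; rewrite ginvK.
split; first by split; [exact: (final1 hG hN Vm) | exact: (final1 hG hN' Vn)].
split; last exact: e3.
split; first exact: st_compact.
split; first exact: (st_open hG).
split => //; split.
  apply: (homeo_glue hG (hLr hG)); [exact: unit_gr | exact: (st_open hG) | ].
  by move=> x y mx my; apply: im.
apply: (homeo_glue hG (hLs hG)); [exact: unit_gs | exact: (st_open hG) | ].
move=> x y mx my e.
rewrite -[x]ginvK -[y]ginvK; congr ginv; apply: inn; try exact: Vm.
by rewrite !gr_inv.
Qed.
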